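(* Let $V$ be a finite-dimensional real $\mathbb Z/3$-representation and $n\ge0$ an integer. Then $V$ has a $\mathbb Z/3$-invariant basis up to sign if and only if $V\oplus n\mathbf 3$ does.
   Context: $\mathbf 3$ denotes the regular representation of $\mathbb Z/3$ ($\mathbb R^3$ with cyclic permutation of coordinates), $n\mathbf 3$ the direct sum of $n$ copies. A basis is invariant up to sign if every group element maps each basis element to plus or minus a basis element. *)

(* Defs.v *)
From HB Require Import structures.
From mathcomp Require Import all_boot all_order all_algebra.
From mathcomp Require Import reals.
Set Implicit Arguments. Unset Strict Implicit. Unset Printing Implicit Defensive.
Import Order.TTheory GRing.Theory Num.Theory.
Local Open Scope ring_scope.

(* A finite-dimensional real Z/3-representation of dimension d is modelled
   (up to isomorphism) as R^d (row vectors 'rV_d) together with the matrix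
   A of the generator g of Z/3, acting by v |-> v *m A, with A^3 = 1.
   The group element g^k acts by A ^+ k, k = 0, 1, 2. *)
Definition is_Z3_rep (R : realType) (d : nat) (A : 'M[R]_d) : Prop :=
  A ^+ 3 = 1.

Definition has_inv_basis_up_to_sign (R : realType) (d : nat) (A : 'M[R]_d)
  : Prop :=
  exists B : 'M[R]_d, B \in unitmx /\
    forall (k : 'I_3) (i : 'I_d), exists (j : 'I_d) (s : bool),
      row i B *m (A ^+ k) = (-1) ^+ s *: row j B.

(* The generator of the representation n*3 = direct sum of n copies of the
   regular representation of Z/3 on R^(n*3): coordinate i = 3q + r is sent to
   coordinate 3q + (r+1 mod 3) (cyclic permutation within each block). *)
Definition nreg (R : realType) (n : nat) : 'M[R]_(n * 3) :=
  \matrix_(i < n * 3, j < n * 3)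
    ((i %/ 3 == j %/ 3)%N && (j %% 3 == (i %% 3).+1 %% 3)%N)%:R.

Definition sum_reg (R : realType) (d n : nat) (A : 'M[R]_d) : 'M[R]_(d + n * 3) :=
  block_mx A 0 0 (nreg R n).

(* Main.v *)
Require Import Defs.
From HB Require Import structures.
From mathcomp Require Import all_boot all_order all_algebra.
From mathcomp Require Import reals.
From mathcomp Require Import fingroup perm zify ring lra.
Set Implicit Arguments. Unset Strict Implicit. Unset Printing Implicit Defensive.
Import Order.TTheory GRing.Theory Num.Theory.
Local Open Scope ring_scope.

Section L2.
Variables (R : realType) (d : nat) (A : 'M[R]_d).
Hypothesis A3 : A ^+ 3 = 1.
Let P : 'M[R]_d := 1 + A + A ^+ 2.

Lemma PA : P *m A = P.
Proof.
rewrite mulmxE /P !mulrDl mul1r -expr2 -exprSr A3.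
by rewrite addrC addrA.
Qed.

Lemma AP : A *m P = P.
Proof.
rewrite mulmxE /P !mulrDr mulr1 -expr2 -exprS A3.
by rewrite addrC addrA.
Qed.

Lemma PP : P *m P = 3%:R *: P.
Proof.
rewrite {2}/P !mulmxDr mulmx1 expr2 -mulmxE mulmxA !PA.
by rewrite scaler_nat !mulrS mulr0n addr0 addrA.
Qed.

Lemma rank_add_rV m (S : 'M[R]_(m, d)) (v : 'rV_d) :
  ~~ (v <= S)%MS -> \rank (S + v)%MS = (\rank S).+1.
Proof.
move=> nvS.
have v0 : v != 0 by apply: contra nvS => /eqP ->; exact: sub0mx.
have := mxrank_sum_cap S v; rewrite rank_rV v0.
have : (\rank (S :&: v)%MS <= 1)%N.
  by apply: leq_trans (mxrankS (capmxSr S v)) _; rewrite rank_rV v0.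
rewrite leq_eqVlt ltnS leqn0 => /orP [/eqP h1|/eqP ->]; last by rewrite !addn0 addn1.
exfalso; move/negP: nvS; apply.
have := mxrank_leqif_sup (capmxSr S v); rewrite h1 rank_rV v0 => -[_ h].
by apply: submx_trans (capmxSl S v); rewrite -h.
Qed.

Lemma sub_coll m1 m2 (X : 'M[R]_(m1, d)) (Y : 'M_(m2, d)) : (X <= col_mx X Y)%MS.
Proof. by rewrite -addsmxE addsmxSl. Qed.
Lemma sub_colr m1 m2 (X : 'M[R]_(m1, d)) (Y : 'M_(m2, d)) : (Y <= col_mx X Y)%MS.
Proof. by rewrite -addsmxE addsmxSr. Qed.

Lemma XP_AA m (X : 'M[R]_(m, d)) : X *m P = 0 -> X *m A *m A = - (X + X *m A).
Proof.
rewrite /P !mulmxDr mulmx1 expr2 -mulmxE mulmxA addrC => /eqP.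
by rewrite addr_eq0 => /eqP.
Qed.

Lemma YA_sub q (X : 'M[R]_(q, d)) : X *m P = 0 ->
  (col_mx X (X *m A) *m A <= col_mx X (X *m A))%MS.
Proof.
move=> XP; rewrite mul_col_mx col_mx_sub sub_colr /= XP_AA //.
by rewrite -scaleN1r scalemx_sub // addmx_sub // ?sub_coll ?sub_colr.
Qed.

Lemma ext_step q (X : 'M[R]_(q, d)) (w : 'rV_d) : X *m P = 0 -> w *m P = 0 ->
  row_free (col_mx X (X *m A)) -> ~~ (w <= col_mx X (X *m A))%MS ->
  row_free (col_mx (col_mx X w) (col_mx X w *m A)).
Proof.
move=> XP wP fY nwY.
set Y := col_mx X (X *m A).
have e : \rank (col_mx (col_mx X w) (col_mx X w *m A)) = \rank ((Y + w) + w *m A)%MS.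
  rewrite -!addsmxE mul_col_mx -(adds_eqmx (addsmxE X w) (addsmxE (X *m A) (w *m A))) -(adds_eqmx (adds_eqmx (addsmxE X (X *m A)) (eqmx_refl w)) (eqmx_refl (w *m A))).
  by rewrite -!addsmxA [(w + _)%MS]addsmxA [(w + X *m A)%MS]addsmxC !addsmxA.
have nwA : ~~ (w *m A <= Y + w)%MS.
  apply/negP => /sub_addsmxP [[u1 u2] /= hu].
  set s := u1 *m Y in hu.
  set c := u2 0 0.
  have hu' : w *m A = s + c *: w by rewrite hu {1}(mx11_scalar u2) mul_scalar_mx.
  have sY : (s <= Y)%MS by rewrite mulmx_sub.
  have sAY : (s *m A <= Y)%MS by apply: submx_trans (submxMr A sY) (YA_sub XP).
  have E : s *m A + c *: s + (c * c) *: w = - (w + (s + c *: w)).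
    by rewrite -hu' -(XP_AA wP) hu' mulmxDl -scalemxAl hu' scalerDr scalerA addrA.
  have T : (c * c + c + 1) *: w = - (s *m A) - c *: s - s.
    apply/rowP => k; have := congr1 (fun M : 'rV[R]_d => M 0 k) E; rewrite !mxE => Ek.
    lra.
  have cpos : c * c + c + 1 != 0.
    by apply/lt0r_neq0; nra.
  move/negP: nwY; apply.
  have -> : w = (c * c + c + 1)^-1 *: ((c * c + c + 1) *: w) by rewrite scalerA mulVf // scale1r.
  rewrite scalemx_sub // T !addmx_sub // -scaleN1r scalemx_sub // ?scalemx_sub //.
rewrite /row_free e rank_add_rV // rank_add_rV //.
by move: fY; rewrite /row_free => /eqP ->; rewrite !addnS !addSn addn0.
Qed.

Lemma W_exists : exists q (Wm : 'M[R]_(q, d)), Wm *m P = 0 /\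
  row_free (col_mx Wm (Wm *m A)) /\ (kermx P <= col_mx Wm (Wm *m A))%MS.
Proof.
suff H : forall k q (X : 'M[R]_(q, d)), X *m P = 0 -> row_free (col_mx X (X *m A)) ->
    (d - \rank (col_mx X (X *m A)) <= k)%N ->
    exists q (Wm : 'M[R]_(q, d)), Wm *m P = 0 /\
    row_free (col_mx Wm (Wm *m A)) /\ (kermx P <= col_mx Wm (Wm *m A))%MS.
  apply: (H d 0 0); first by rewrite mul0mx.
    by rewrite /row_free -leqn0 rank_leq_row.
  exact: leq_subr.
have step : forall q (X : 'M[R]_(q, d)), X *m P = 0 -> row_free (col_mx X (X *m A)) ->
    ~~ (kermx P <= col_mx X (X *m A))%MS ->
    exists X' : 'M[R]_(q + 1, d), [/\ X' *m P = 0, row_free (col_mx X' (X' *m A)) &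
      \rank (col_mx X' (X' *m A)) = (\rank (col_mx X (X *m A))).+2].
  move=> q X XP fY hW.
  have [i hi] := row_subPn hW.
  set w := row i (kermx P).
  have wP : w *m P = 0 by apply/sub_kermxP; exact: row_sub.
  have X'P : col_mx X w *m P = 0 by rewrite mul_col_mx XP wP col_mx0.
  have fY' := ext_step XP wP fY hi.
  exists (col_mx X w); split => //.
  move: (fY) (fY'); rewrite /row_free => /eqP -> /eqP ->; lia.
elim=> [|k IH] q X XP fY hk;
  (case: (boolP (kermx P <= col_mx X (X *m A))%MS) => hW; first by exists q, X);
  have [X' [X'P fY' r2]] := step q X XP fY hW;
  have := rank_leq_col (col_mx X' (X' *m A)).
- rewrite r2; lia.
- move=> hr; apply: (IH _ _ X'P fY'); rewrite r2; lia.
Qed.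

Lemma structure : exists p q (Fm : 'M[R]_(p, d)) (Wm : 'M[R]_(q, d)),
  [/\ Fm *m A = Fm, Wm *m P = 0, row_free (col_mx Fm (col_mx Wm (Wm *m A))) &
       row_full (col_mx Fm (col_mx Wm (Wm *m A)))].
Proof.
have [q [Wm [WP [fY hWY]]]] := W_exists.
set Y := col_mx Wm (Wm *m A) in fY hWY *.
set K := kermx (A - 1).
set Fm := row_base K.
have FK : (Fm <= K)%MS by rewrite eq_row_base.
have KF : (K <= Fm)%MS by rewrite eq_row_base.
have subK : forall m (Z : 'M[R]_(m, d)), (Z <= K)%MS -> Z *m A = Z.
  move=> m Z /sub_kermxP; rewrite mulmxBr mulmx1 => /eqP; by rewrite subr_eq0 => /eqP.
have YP : (Y <= kermx P)%MS.
  rewrite col_mx_sub; apply/andP; split; apply/sub_kermxP => //.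
  by rewrite -mulmxA AP.
have cap0 : (Fm :&: Y)%MS = 0.
  set Z := (Fm :&: Y)%MS.
  have ZA : Z *m A = Z by apply: subK; apply: submx_trans (capmxSl _ _) FK.
  have ZP : Z *m P = 0.
    by apply/sub_kermxP; apply: submx_trans (capmxSr _ _) YP.
  move: ZP; rewrite /P !mulmxDr mulmx1 expr2 -mulmxE mulmxA !ZA.
  rewrite -mulr2n -mulrSr -scaler_nat => /eqP; rewrite scaler_eq0 pnatr_eq0 /=.
  by move/eqP.
exists (\rank K), q, Fm, Wm; split => //.
- exact: subK.
- rewrite /row_free -addsmxE mxrank_disjoint_sum //.
  move: (row_base_free K) fY; rewrite /row_free => /eqP -> /eqP ->; done.
- rewrite -sub1mx -addsmxE.
  have three : (3%:R : R) != 0 by rewrite pnatr_eq0.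
  have -> : (1%:M : 'M[R]_d) = (3%:R^-1 *: P) + (1 - 3%:R^-1 *: P) by rewrite addrC subrK.
  rewrite addmx_sub //.
    apply: submx_trans (addsmxSl _ _); apply: submx_trans KF.
    apply: scalemx_sub; apply/sub_kermxP.
    by rewrite mulmxBr mulmx1 PA subrr.
  apply: submx_trans (addsmxSr _ _); apply: submx_trans hWY.
  apply/sub_kermxP.
  by rewrite mulmxBl mul1mx -scalemxAl PP scalerA mulVf // scale1r subrr.
Qed.
End L2.

Section L3.
Variable R : realType.

Definition rows_in m1 m2 n (M : 'M[R]_(m1, n)) (B : 'M[R]_(m2, n)) :=
  forall i, exists j, row i M = row j B.

Lemma rows_in_col m1 m2 m3 n (M1 : 'M[R]_(m1, n)) (M2 : 'M[R]_(m2, n)) (B : 'M[R]_(m3, n)) :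
  rows_in M1 B -> rows_in M2 B -> rows_in (col_mx M1 M2) B.
Proof.
move=> h1 h2 i; rewrite -[i]splitK; case: (split i) => a /=.
  by have [j hj] := h1 a; exists j; rewrite rowKu.
by have [j hj] := h2 a; exists j; rewrite rowKd.
Qed.

Lemma rows_in_u m1 m2 m3 n (M1 : 'M[R]_(m1, n)) (M2 : 'M[R]_(m2, n)) (B : 'M[R]_(m3, n)) :
  rows_in (col_mx M1 M2) B -> rows_in M1 B.
Proof. by move=> h i; have [j hj] := h (lshift m2 i); exists j; rewrite -hj rowKu. Qed.

Lemma rows_in_d m1 m2 m3 n (M1 : 'M[R]_(m1, n)) (M2 : 'M[R]_(m2, n)) (B : 'M[R]_(m3, n)) :
  rows_in (col_mx M1 M2) B -> rows_in M2 B.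
Proof. by move=> h i; have [j hj] := h (rshift m1 i); exists j; rewrite -hj rowKd. Qed.

Lemma rows_in_refl m n (B : 'M[R]_(m, n)) : rows_in B B.
Proof. by move=> i; exists i. Qed.

Lemma gsub_coll m1 m2 n (X : 'M[R]_(m1, n)) (Y : 'M_(m2, n)) : (X <= col_mx X Y)%MS.
Proof. by rewrite -addsmxE addsmxSl. Qed.
Lemma gsub_colr m1 m2 n (X : 'M[R]_(m1, n)) (Y : 'M_(m2, n)) : (Y <= col_mx X Y)%MS.
Proof. by rewrite -addsmxE addsmxSr. Qed.

Lemma struct_dim d (A : 'M[R]_d) p q (Fm : 'M[R]_(p, d)) (Wm : 'M[R]_(q, d)) :
  row_free (col_mx Fm (col_mx Wm (Wm *m A))) -> row_full (col_mx Fm (col_mx Wm (Wm *m A))) ->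
  d = (p + (q + q))%N.
Proof. by rewrite /row_free /row_full => /eqP h1 /eqP h2; rewrite -h2 h1. Qed.

Lemma struct_tr d (A : 'M[R]_d) p q (Fm : 'M[R]_(p, d)) (Wm : 'M[R]_(q, d)) :
  Fm *m A = Fm -> Wm *m A *m A = - (Wm + Wm *m A) ->
  row_free (col_mx Fm (col_mx Wm (Wm *m A))) -> row_full (col_mx Fm (col_mx Wm (Wm *m A))) ->
  \tr A = p%:R - q%:R.
Proof.
move=> FA WAA fC uC.
set C := col_mx Fm (col_mx Wm (Wm *m A)) in fC uC *.
set M : 'M[R]_(p + (q + q)) := block_mx 1%:M 0 0 (block_mx 0 1%:M (-1%:M) (-1%:M)).
have CA : C *m A = M *m C.
  rewrite /C /M mul_col_mx mul_col_mx mul_block_col mul_block_col FA WAA.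
  by rewrite !mulNmx !mul1mx !mul0mx !addr0 !add0r opprD.
have [D hD] : exists D : 'M[R]_(d, p + (q + q)), 1%:M = D *m C.
  by apply/submxP; rewrite sub1mx.
have CD : C *m D = 1%:M.
  apply: (row_free_inj fC) => /=.
  by rewrite -mulmxA -hD mul1mx mulmx1.
have -> : \tr A = \tr (D *m (C *m A)) by rewrite mulmxA -hD mul1mx.
rewrite CA mulmxA mxtrace_mulC mulmxA CD mul1mx /M !mxtrace_block mxtrace0 !mxtrace1.
by rewrite raddfN /= mxtrace1 add0r.
Qed.

Lemma struct_basis d (A : 'M[R]_d) p q (Fm : 'M[R]_(p, d)) (Wm : 'M[R]_(q, d)) :
  Fm *m A = Fm -> Wm *m A *m A = - (Wm + Wm *m A) ->
  row_full (col_mx Fm (col_mx Wm (Wm *m A))) -> d = (p + (q + q))%N -> (q <= p)%N ->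
  has_inv_basis_up_to_sign A.
Proof.
move=> FA WAA uC ed lqp.
have [r er] : exists r, p = (q + r)%N by exists (p - q)%N; rewrite subnKC.
subst p d.
set F1 := usubmx Fm; set F2 := dsubmx Fm.
have eFm : Fm = col_mx F1 F2 by rewrite vsubmxK.
have F1A : F1 *m A = F1 by rewrite /F1 mul_usub_mx FA.
have F2A : F2 *m A = F2 by rewrite /F2 mul_dsub_mx FA.
set X := F1 + Wm.
have XAAA : X *m A *m A *m A = X.
  rewrite /X !mulmxDl !F1A WAA mulNmx mulmxDl WAA opprD opprK.
  by rewrite [- _ + _]addrC addrK.
set B := col_mx (col_mx X F2) (col_mx (X *m A) (X *m A *m A)).
have hF1 : F1 *+ 3 = X + X *m A + X *m A *m A.
  rewrite /X !mulmxDl !F1A WAA.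
  by apply/matrixP => a b; rewrite !mxE; lra.
exists B; split.
  rewrite -row_full_unit -sub1mx; move: uC; rewrite -sub1mx => uC; apply: submx_trans uC _.
  have XB : (X <= B)%MS by apply: submx_trans (gsub_coll _ _) (gsub_coll _ _).
  have XAB : (X *m A <= B)%MS by apply: submx_trans (gsub_coll _ _) (gsub_colr _ _).
  have XAAB : (X *m A *m A <= B)%MS by apply: submx_trans (gsub_colr _ _) (gsub_colr _ _).
  have F2B : (F2 <= B)%MS by apply: submx_trans (gsub_colr _ _) (gsub_coll _ _).
  have F1B : (F1 <= B)%MS.
    have three : (3%:R : R) != 0 by rewrite pnatr_eq0.
    have -> : F1 = 3%:R^-1 *: (F1 *+ 3) by rewrite -scaler_nat scalerA mulVf // scale1r.
    rewrite hF1; apply: scalemx_sub; apply: addmx_sub; [apply: addmx_sub|] => //.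
  have eW : Wm = X - F1 by rewrite /X addrC addKr.
  rewrite eFm !col_mx_sub F1B F2B /= eW addmx_sub // ?mulmxBl ?F1A; last first.
    by rewrite -scaleN1r scalemx_sub.
  by rewrite addmx_sub // -scaleN1r scalemx_sub.
have BA : B *m A = col_mx (col_mx (X *m A) F2) (col_mx (X *m A *m A) X).
  by rewrite /B !mul_col_mx F2A XAAA.
have BAA : B *m A *m A = col_mx (col_mx (X *m A *m A) F2) (col_mx X (X *m A)).
  by rewrite BA !mul_col_mx F2A XAAA.
have rB : rows_in B B := rows_in_refl B.
have r1 := rows_in_u (rows_in_u rB).
have r2 := rows_in_d (rows_in_u rB).
have r3 := rows_in_u (rows_in_d rB).
have r4 := rows_in_d (rows_in_d rB).
have hk : forall k : 'I_3, rows_in (B *m A ^+ k) B.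
  case=> [[|[|[|k]]] hk] //=.
  - by rewrite expr0 mulmx1.
  - by rewrite expr1 BA; apply: rows_in_col; apply: rows_in_col.
  - by rewrite expr2 -mulmxE mulmxA BAA; apply: rows_in_col; apply: rows_in_col.
move=> k i; have [j hj] := hk k i; exists j, false.
by rewrite expr0 scale1r -row_mul.
Qed.
End L3.
Section Nreg.
Variables (R : realType) (n : nat).

Lemma sig_lt (i : 'I_(n * 3)) : (3 * (i %/ 3) + (i %% 3).+1 %% 3 < n * 3)%N.
Proof. have := ltn_ord i. lia. Qed.

Definition sigf (i : 'I_(n * 3)) : 'I_(n * 3) := Ordinal (sig_lt i).

Lemma sigf3 i : sigf (sigf (sigf i)) = i.
Proof. apply: val_inj => /=. lia. Qed.

Lemma sigf_inj : injective sigf.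
Proof. by apply: (can_inj (g := fun i => sigf (sigf i))) => i; rewrite sigf3. Qed.

Definition sigp : 'S_(n * 3) := perm sigf_inj.

Lemma nregE : nreg R n = perm_mx sigp.
Proof.
apply/matrixP => i j; rewrite !mxE permE.
congr ((nat_of_bool _)%:R).
apply/idP/idP.
- case/andP => /eqP h1 /eqP h2; apply/eqP/val_inj => /=. lia.
- move/eqP/(f_equal val) => /= h. apply/andP; split; apply/eqP; lia.
Qed.

Lemma nreg3 : nreg R n ^+ 3 = 1.
Proof.
rewrite nregE !exprS expr0 mulr1 -!mulmxE -!perm_mxM.
have -> : (sigp * (sigp * sigp) = 1)%g.
  by apply/permP => i; rewrite !permM !permE /= sigf3.
exact: perm_mx1.
Qed.

Lemma tr_nreg : \tr (nreg R n) = 0.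
Proof.
rewrite /mxtrace big1 // => i _; rewrite mxE.
have -> : ((i %% 3) == (i %% 3).+1 %% 3)%N = false by apply/eqP; lia.
by rewrite andbF.
Qed.
End Nreg.
Section L1.
Variable R : realType.

Lemma row_unit_neq0 d (B : 'M[R]_d) i : B \in unitmx -> row i B != 0.
Proof.
move=> uB; apply/eqP => h.
have : row i (B *m invmx B) = 0 by rewrite row_mul h mul0mx.
rewrite mulmxV // => /rowP /(_ i); rewrite !mxE eqxx /=.
by move/eqP; rewrite oner_eq0.
Qed.

Lemma basis_tr d (A : 'M[R]_d) : A ^+ 3 = 1 -> has_inv_basis_up_to_sign A -> 0 <= \tr A.
Proof.
move=> A3 [B [uB hB]].
have -> : \tr A = \tr (B *m A *m invmx B).
  by rewrite mxtrace_mulC mulmxA mulVmx // mul1mx.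
rewrite /mxtrace; apply: sumr_ge0 => i _.
have [j [s hj]] := hB (Ordinal (isT : (1 < 3)%N)) i.
rewrite expr1 in hj.
have -> : (B *m A *m invmx B) i i = (row i (B *m A *m invmx B)) 0 i by rewrite [RHS]mxE.
rewrite !row_mul hj -scalemxAl -row_mul mulmxV // !mxE.
case: s hj => /= hj; last by rewrite expr0 mul1r ler0n.
rewrite expr1.
case: (eqVneq j i) => [eji|]; last by rewrite mulr0n mulr0.
subst j; exfalso.
have h3 : row i B *m A ^+ 3 = - - - row i B.
  by rewrite expr1 scaleN1r in hj; rewrite !exprS expr0 mulr1 -!mulmxE !mulmxA hj mulNmx hj mulNmx mulNmx hj.
rewrite A3 mulmx1 !opprK in h3.
have : (2:R) *: row i B = 0 by rewrite scaler_nat mulr2n {2}h3 subrr.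
move/eqP; rewrite scaler_eq0 pnatr_eq0 /= => h; move: (row_unit_neq0 i uB); by rewrite h.
Qed.
End L1.
Lemma blockpow (R : realType) m1 m2 (A : 'M[R]_m1) (N : 'M[R]_m2) k :
  (block_mx A 0 0 N) ^+ k = block_mx (A ^+ k) 0 0 (N ^+ k).
Proof.
elim: k => [|k IH]; first by rewrite !expr0 -scalar_mx_block.
by rewrite !exprS -!mulmxE IH mulmx_block !mulmx0 !mul0mx !addr0 !add0r.
Qed.

Lemma main_char (R : realType) d (A : 'M[R]_d) : A ^+ 3 = 1 ->
  (has_inv_basis_up_to_sign A <-> 0 <= \tr A).
Proof.
move=> A3; split; first exact: basis_tr.
move=> htr.
have [p [q [Fm [Wm [FA WP fC uC]]]]] := structure A3.
have WAA := XP_AA WP.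
apply: (struct_basis FA WAA uC (struct_dim fC uC)).
by rewrite (struct_tr FA WAA fC uC) subr_ge0 ler_nat in htr.
Qed.

Theorem corollary2p22 (R : realType) (d : nat) (A : 'M[R]_d) (n : nat) :
  is_Z3_rep A ->
  (has_inv_basis_up_to_sign A <-> has_inv_basis_up_to_sign (sum_reg n A)).
Proof.
rewrite /is_Z3_rep => A3.
have S3 : sum_reg n A ^+ 3 = 1.
  by rewrite /sum_reg blockpow A3 nreg3 -scalar_mx_block.
have tr : \tr (sum_reg n A) = \tr A by rewrite /sum_reg mxtrace_block tr_nreg addr0.
by rewrite (main_char A3) (main_char S3) tr.
Qed.
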